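(* For every $j\in\{1,\dots,n\}$, \[ \left|\frac{\widehat f_{e_n}(Y_j)-\widehat f(Y_j)}{f_{e_n}(Y_j)}\right|\le2\left[\mathbf 1_{\{f(Y_j)<2e_n\}}+\frac{\big(\sup_{y\in\mathbb R}|\widehat f(y)-f(y)|\big)^2}{e_n^2}\right]. \]
   Context: $Y$ is a real random variable with density $f$, and $Y_1,\dots,Y_n$ are i.i.d. copies of $Y$. For a kernel $K:\mathbb R\to\mathbb R_+$ and bandwidth $h>0$, $\widehat f(y)=\frac1{nh}\sum_{i=1}^nK(\frac{Y_i-y}{h})$. $e_n>0$; $f_{e_n}=\max(f,e_n)$ and $\widehat f_{e_n}=\max(e_n,\widehat f)$. *)

(* Defs.v *)
From HB Require Import structures.
From mathcomp Require Import all_boot all_order all_algebra.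
From mathcomp Require Import all_classical all_reals all_analysis.
Set Implicit Arguments. Unset Strict Implicit. Unset Printing Implicit Defensive.
Import Order.TTheory GRing.Theory Num.Theory.
Local Open Scope classical_set_scope.
Local Open Scope ring_scope.

Definition kde (R : realType) (n : nat) (K : R -> R) (h : R)
  (Ys : 'I_n -> R) (y : R) : R :=
  (n%:R * h)^-1 * \sum_(i < n) K ((Ys i - y) / h).

Definition trunc_below (R : realType) (e : R) (g : R -> R) (y : R) : R :=
  Num.max e (g y).

Definition has_density (R : realType) d (T : measurableType d)
  (P : probability T R) (X : {RV P >-> R}) (f : R -> R) : Prop :=
  measurable_fun setT f /\ (forall x, 0 <= f x) /\
  forall A : set R, measurable A ->
    distribution P X A = (\int[lebesgue_measure]_(x in A) (f x)%:E)%E.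

Definition mutually_independent (R : realType) d (T : measurableType d)
  (P : probability T R) (n : nat) (X : 'I_n -> {RV P >-> R}) : Prop :=
  forall (J : {set 'I_n}) (B : 'I_n -> set R),
    (forall j, measurable (B j)) ->
    P (\bigcap_(j in [set j | j \in J]) (X j @^-1` B j)) =
    (\prod_(j in J) P (X j @^-1` B j))%E.

(* Main.v *)
Require Import Defs.
From HB Require Import structures.
From mathcomp Require Import all_boot all_order all_algebra.
From mathcomp Require Import all_classical all_reals all_analysis.
From mathcomp Require Import ring lra.
Import Order.TTheory GRing.Theory Num.Theory.
Local Open Scope classical_set_scope.
Local Open Scope ring_scope.

Theorem lemma2 (R : realType) (d : measure_display) (T : measurableType d)
  (P : probability T R) (n : nat) (Y : 'I_n -> {RV P >-> R})
  (f : R -> R) (K : R -> R) (h e : R)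
  (hf : forall i, has_density (Y i) f)
  (hind : mutually_independent Y)
  (hK : forall u, 0 <= K u) (hh : 0 < h) (he : 0 < e) :
  forall (omega : T) (j : 'I_n),
    let fhat := kde K h (fun i => Y i omega) in
    let y := Y j omega in
    ((`| (trunc_below e fhat y - fhat y) / trunc_below e f y |)%:E <=
     2%:E * ((\1_[set x | (f x < 2 * e)%R] y)%:E +
       ereal_sup (range (fun x => (`| fhat x - f x |)%:E)) ^+ 2 * (e ^- 2)%:E))%E.
Proof.
move=> omega j; set fhat := kde _ _ _; set y := Y j omega; cbv zeta.
set a := fhat y. set F := f y.
set S := ereal_sup _.
have a0 : 0 <= a.
  rewrite /a /fhat /kde; apply: mulr_ge0.
    by rewrite invr_ge0 mulr_ge0 ?ler0n ?ltW.
  by apply: sumr_ge0 => i _.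
have SaF : ((`|a - F|)%:E <= S)%E.
  by apply: ereal_sup_ubound; exists y.
rewrite /trunc_below -/a -/F.
have Hmax : e <= Num.max e F by rewrite le_max lexx.
have Mpos : 0 < Num.max e F by apply: lt_le_trans Hmax.
have num0 : 0 <= Num.max e a - a by rewrite subr_ge0 le_max lexx orbT.
have nume : Num.max e a - a <= e.
  by rewrite lerBlDr; case: (leP e a) => H; rewrite ?(max_r (ltW _)) ?max_r // ?max_l; lra.
case: S SaF => [s| |] // Hs.
- rewrite lee_fin in Hs.
  rewrite -EFin_expe -EFinM lee_fin.
  rewrite ger0_norm; last by rewrite divr_ge0 // ltW.
  rewrite /indic /=.
  case: (boolP (F < 2 * e)) => HF.
  +
    have : (Num.max e a - a) / Num.max e F <= 1.
      by rewrite ler_pdivrMr // mul1r; apply: le_trans nume Hmax.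
    have : 0 <= s ^+ 2 * e ^- 2 by rewrite mulr_ge0 ?sqr_ge0 ?invr_ge0 ?exprn_ge0 ?ltW.
    have -> : (y \in [set x | f x < 2 * e])%:R = 1 :> R by rewrite mem_set.
    lra.
  + rewrite memNset /=; last by apply/negP.
    rewrite -leNgt in HF.
    have Fpos : 0 < F by lra.
    have -> : Num.max e F = F by apply/max_idPr; lra.
    rewrite add0r.
    case: (leP e a) => Hea.
      by rewrite subrr mul0r mulr_ge0 // mulr_ge0 ?sqr_ge0 // invr_ge0 exprn_ge0 // ltW.
    have hs : F / 2 <= s.
      apply: le_trans Hs; rewrite distrC ger0_norm; lra.
    have hs2 : (F / 2) ^+ 2 <= s ^+ 2 by rewrite ler_pXn2r // ?nnegrE; lra.
    have e0 : e != 0 by rewrite gt_eqF.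
    have hF2 : F * F <= 4 * (s * s).
      have -> : F * F = 4 * ((F / 2) ^+ 2) by rewrite expr2; field.
      by rewrite -expr2; lra.
    have ht : e <= 2 * (s ^+ 2 / e ^+ 2) * F.
      rewrite -(@ler_pM2r _ (e ^+ 2)) ?exprn_gt0 //.
      have -> : 2 * (s ^+ 2 / e ^+ 2) * F * e ^+ 2 = 2 * (s * s) * F.
        by rewrite !expr2; field.
      rewrite expr2.
      have h1 : F * F * F <= 4 * (s * s) * F by rewrite ler_pM2r.
      have h2 : 4 * (e * e) <= F * F by nra.
      have h3 : 8 * (e * e * e) <= F * F * F by nra.
      nra.
    rewrite ler_pdivrMr //; lra.
- have -> : ((+oo : \bar R) ^+ 2 = +oo)%E by [].
  rewrite mulyr gtr0_sg ?invr_gt0 ?exprn_gt0 // mul1e.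
  by rewrite addey // mulry gtr0_sg // mul1e leey.
Qed.
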